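(* Let $k$, $(U,Q)$, $f$, $L$, $\beta$ be as below. There is a bijection between the set of $\mathrm{O}(U)(k)$-orbits (under conjugation) on $V_f(k)$ and the set of classes $\alpha\in(L^\times/L^{\times2})_{N=1}$ such that the bilinear form $\langle\,,\rangle_\alpha$ on $L$ is split.
   Context: $k$ is a field of characteristic not $2$; $(U,Q)$ is the split quadratic space over $k$ of dimension $2n+2$ and discriminant $1$, with bilinear form $\langle v,w\rangle=Q(v+w)-Q(v)-Q(w)$; $f\in k[x]$ is monic of degree $2n+2$ with no repeated roots; $V_f(k)$ is the set of $k$-linear operators $T$ on $U$ with $\langle Tv,w\rangle=\langle v,Tw\rangle$ and characteristic polynomial $f$. $L=k[x]/f(x)$ and $\beta$ is the image of $x$. $(L^\times/L^{\times2})_{N=1}$ is the kernel of the norm map $L^\times/L^{\times2}\to k^\times/k^{\times2}$. For $\alpha\in L^\times$, $\langle\lambda,\mu\rangle_\alpha=\mathrm{Tr}_{L/k}(\alpha\lambda\mu/f'(\beta))$ (the coefficient of $\beta^{2n+1}$ in $\alpha\lambda\mu$); whether it is split depends only on the class of $\alpha$ modulo squares. *)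

(* Defs.v *)
From HB Require Import structures.
From mathcomp Require Import all_boot all_order all_algebra all_field.
Set Implicit Arguments. Unset Strict Implicit. Unset Printing Implicit Defensive.
Import Order.TTheory GRing.Theory.
Local Open Scope ring_scope.

(* Conventions: U = k^(2n+2) as column vectors 'cV_(n.+1 + n.+1);
   split quadratic form Q(x) = sum_{i<=n} x_i * x_{n+1+i} (hyperbolic). *)

Definition QU (k : fieldType) (n : nat) (v : 'cV[k]_(n.+1 + n.+1)) : k :=
  \sum_(i < n.+1) v (lshift n.+1 i) 0 * v (rshift n.+1 i) 0.

Definition bU (k : fieldType) (n : nat) (v w : 'cV[k]_(n.+1 + n.+1)) : k :=
  QU (v + w) - QU v - QU w.

Definition selfadj (k : fieldType) (n : nat) (T : 'M[k]_(n.+1 + n.+1)) : Prop :=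
  forall v w : 'cV[k]_(n.+1 + n.+1), bU (T *m v) w = bU v (T *m w).

Definition Vf (k : fieldType) (n : nat) (f : {poly k}) (T : 'M[k]_(n.+1 + n.+1)) : Prop :=
  selfadj T /\ char_poly T = f.

Definition OU (k : fieldType) (n : nat) (g : 'M[k]_(n.+1 + n.+1)) : Prop :=
  g \in unitmx /\ forall v, QU (g *m v) = QU v.

Definition orbit_rel (k : fieldType) (n : nat) (T T' : 'M[k]_(n.+1 + n.+1)) : Prop :=
  exists g, OU g /\ T' = g *m T *m invmx g.

(* Elements of L = k[x]/f are represented by polynomials; alpha is a unit of L
   iff coprimep alpha f.  Two units have the same class in L^x/L^x2 iff
   alpha' = alpha * lambda^2 in L for some unit lambda. *)
Definition sqclass_rel (k : fieldType) (f a a' : {poly k}) : Prop :=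
  exists l : {poly k}, coprimep l f /\ f %| (a' - a * l ^+ 2).

(* N_{L/k}(alpha) = det of multiplication by alpha in the basis 1, beta, ..., beta^(2n+1) *)
Definition normL (k : fieldType) (n : nat) (f a : {poly k}) : k :=
  \det (\matrix_(i < n.+1 + n.+1, j < n.+1 + n.+1) ((a * 'X^j) %% f)`_i).

(* class of alpha lies in the kernel of the norm L^x/L^x2 -> k^x/k^x2 *)
Definition norm_sq (k : fieldType) (n : nat) (f a : {poly k}) : Prop :=
  exists c : k, normL n f a = c ^+ 2.

(* element of L with coordinates x in the basis 1, beta, ..., beta^(2n+1) *)
Definition poly_of (k : fieldType) (n : nat) (x : 'cV[k]_(n.+1 + n.+1)) : {poly k} :=
  \sum_(i < n.+1 + n.+1) x i 0 *: 'X^i.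

(* <lambda, mu>_alpha = coefficient of beta^(2n+1) in alpha*lambda*mu *)
Definition bL (k : fieldType) (n : nat) (f a : {poly k}) (x y : 'cV[k]_(n.+1 + n.+1)) : k :=
  ((a * poly_of x * poly_of y) %% f)`_(n + n).+1.

(* <,>_alpha is split: (L, <,>_alpha) is isometric to the split space (U, <,>) *)
Definition split_form (k : fieldType) (n : nat) (f a : {poly k}) : Prop :=
  exists phi : 'M[k]_(n.+1 + n.+1), phi \in unitmx /\
    forall u v, bL f a (phi *m u) (phi *m v) = bU u v.

Arguments Vf {k} n f T.

(* Main.v *)
Require Import Defs.
From HB Require Import structures.
From mathcomp Require Import all_boot all_order all_algebra all_field.
From mathcomp Require Import ring zify.
From Stdlib Require Import Classical ClassicalEpsilon.
Set Implicit Arguments. Unset Strict Implicit. Unset Printing Implicit Defensive.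
Import GRing.Theory.
Local Open Scope ring_scope.

Lemma horner_mx_sum (k : fieldType) m (T : 'M[k]_m.+1) (g : {poly k}) :
  horner_mx T g = \sum_(i < size g) g`_i *: T ^+ i.
Proof.
rewrite -{1}[g]coefK poly_def linear_sum /=; apply: eq_bigr => i _.
by rewrite horner_mxZ rmorphXn /= horner_mx_X.
Qed.

Lemma chi_dvd (k : fieldType) m (T : 'M[k]_m.+1) (g : {poly k}) :
  horner_mx T g = 0 -> char_poly T %| g ^+ m.+1.
Proof.
move=> Hg.
pose X : 'M[{poly k}]_m.+1 := ('X : {poly k})%:M.
pose A : 'M[{poly k}]_m.+1 := map_mx polyC T.
have cXA : GRing.comm X A by rewrite /GRing.comm /X -!mulmxE scalar_mxC.
have E1 : g%:M = \sum_(i < size g) (g`_i)%:P *: X ^+ i :> 'M[{poly k}]_m.+1.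
  rewrite -{1}[g]coefK poly_def raddf_sum /=; apply: eq_bigr => i _.
  rewrite /X -mul_polyC -scale_scalar_mx; congr (_ *: _).
  move: (i : nat) => j; elim: j => [|j IH]; first by rewrite !expr0.
  by rewrite !exprS scalar_mxM IH mulmxE.
have E2 : 0 = \sum_(i < size g) (g`_i)%:P *: A ^+ i :> 'M[{poly k}]_m.+1.
  transitivity (map_mx polyC (horner_mx T g)); first by rewrite Hg map_mx0.
  rewrite horner_mx_sum raddf_sum /=; apply: eq_bigr => i _.
  by rewrite map_mxZ rmorphXn.
have E3 : g%:M = (X - A) * \sum_(i < size g) (g`_i)%:P *: \sum_(j < i) X ^+ (i.-1 - j) * A ^+ j.
  rewrite -[g%:M]subr0 [X in _ - X]E2 E1 -sumrB mulr_sumr; apply: eq_bigr => i _.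
  by rewrite -scalerBr (subrXX_comm _ cXA) scalerAr.
have := congr1 determinant E3.
rewrite det_scalar -mulmxE det_mulmx => ->.
by rewrite /char_poly dvdp_mulr.
Qed.

Lemma colker_unit (k : fieldType) m (A : 'M[k]_m) :
  (forall v : 'cV_m, A *m v = 0 -> v = 0) -> A \in unitmx.
Proof.
move=> H; rewrite -unitmx_tr -row_free_unit -kermx_eq0; apply/eqP/row_matrixP => i.
rewrite row0; apply: trmx_inj; rewrite trmx0; apply: H.
by rewrite -[X in X *m _]trmxK -trmx_mul -row_mul mulmx_ker row0 trmx0.
Qed.

Lemma size1_dvd (k : fieldType) (d q : {poly k}) : size d == 1%N -> d %| q.
Proof.
by case/size_poly1P => c c0 ->; rewrite -[c%:P]mulr1 mul_polyC dvdpZl // dvd1p.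
Qed.

Section Cyc.
Variables (k : fieldType) (m : nat) (f : {poly k}) (T : 'M[k]_m.+1).
Hypotheses (HcT : char_poly T = f) (Hsep : separable_poly f).
Local Notation hT := (horner_mx T).

Lemma f_neq0 : f != 0.
Proof. by rewrite -HcT -size_poly_eq0 size_char_poly. Qed.

Lemma hT_f : hT f = 0.
Proof. by rewrite -HcT Cayley_Hamilton. Qed.

Lemma hT_mod p : hT (p %% f) = hT p.
Proof. by rewrite {2}(divp_eq p f) rmorphD rmorphM /= hT_f mulr0 add0r. Qed.

Lemma hTM p q (v : 'cV_m.+1) : hT (p * q) *m v = hT p *m (hT q *m v).
Proof. by rewrite rmorphM /= -mulmxE mulmxA. Qed.

Lemma hT_dvd d q (v : 'cV_m.+1) : d %| q -> hT d *m v = 0 -> hT q *m v = 0.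
Proof. by move=> /divpK <- Hd; rewrite hTM Hd mulmx0. Qed.

Lemma irr_dvd_pow (d g : {poly k}) e : irreducible_poly d -> d %| g ^+ e -> d %| g.
Proof.
move=> Hi; elim: e => [|e IH].
  by rewrite expr0 dvdp1 => /eqP Hs; case: Hi; rewrite Hs.
rewrite exprS; case: (boolP (d %| g)) => // Hn.
by rewrite Gauss_dvdpr ?irreducible_poly_coprime // => /IH; rewrite (negPf Hn).
Qed.

Lemma irr_ker d : irreducible_poly d -> d %| f -> exists2 v : 'cV_m.+1, v != 0 & hT d *m v = 0.
Proof.
move=> Hi Hdf.
case: (boolP (hT d \in unitmx)) => U; last first.
  apply: NNPP => Hn; move/negP: U; apply; apply: colker_unit => v Hv.
  by apply: NNPP => Hv0; apply: Hn; exists v => //; apply/eqP.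
exfalso.
set g := f %/ d.
have Hf : f = g * d by rewrite divpK.
have Hg : hT g = 0.
  have := hT_f; rewrite Hf rmorphM /= -mulmxE => /(congr1 (mulmx^~ (invmx (hT d)))).
  by rewrite mulmxK // mul0mx.
have := chi_dvd Hg; rewrite HcT => Hfg.
have Hdg : d %| g by apply: (@irr_dvd_pow _ _ m.+1) => //; apply: dvdp_trans Hfg.
have Hc : coprimep g d by apply: (separable_coprime Hsep); rewrite -Hf.
have : coprimep d d by apply: coprimep_dvdl Hdg _; rewrite coprimep_sym.
by rewrite coprimepp; case: Hi => H _; rewrite gtn_eqF.
Qed.

Lemma cyc_gen d : d %| f -> exists v : 'cV_m.+1, forall q, (hT q *m v == 0) = (d %| q).
Proof.
have [s] := ubnP (size d); elim: s d => // s IH d Hs Hdf.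
have dn0 : d != 0 by apply: contraTneq Hdf => ->; rewrite dvd0p f_neq0.
case: (leqP (size d) 1) => Hs1.
  exists 0 => q; rewrite mulmx0 eqxx; symmetry; apply: size1_dvd.
  by rewrite eqn_leq Hs1 size_poly_gt0.
case: (classic (irreducible_poly d)) => Hi.
  have [v v0 Hv] := irr_ker Hi Hdf.
  exists v => q; apply/idP/idP => [/eqP Hq|Hq]; last by apply/eqP; apply: hT_dvd Hv.
  apply: contraT => Hn; move: Hn; rewrite -irreducible_poly_coprime //.
  case/Bezout_eq1_coprimepP => [[u w]] /= Huw.
  suff : v == 0 by rewrite (negPf v0).  apply/eqP.
  rewrite -[v]mul1mx -(horner_mx_C T 1) polyC1 -Huw rmorphD /= mulmxDl.
  by rewrite !hTM Hq Hv !mulmx0 addr0.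
have [q1 [Hq1 [Hq1d Hnq]]] : exists q1 : {poly k}, size q1 != 1%N /\ q1 %| d /\ ~~ (q1 %= d).
  apply: NNPP => Hn; apply: Hi; split => // q Hq Hqd; apply: NNPP => Hn2.
  by apply: Hn; exists q; split => //; split => //; apply/negP.
set q2 := d %/ q1.
have Hd : d = q2 * q1 by rewrite divpK.
have q1n0 : q1 != 0 by apply: contraNneq dn0 => H; move: Hq1d; rewrite H dvd0p.
have q2n0 : q2 != 0 by apply: contraNneq dn0 => H; rewrite Hd H mul0r.
have sq1 : (1 < size q1)%N by rewrite ltn_neqAle eq_sym Hq1 size_poly_gt0.
have sq2 : (1 < size q2)%N.
  rewrite ltn_neqAle size_poly_gt0 q2n0 andbT; apply: contra Hnq ; rewrite eq_sym => Hs2; case/size_poly1P: Hs2 => c c0 Hc.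
  by rewrite Hd Hc mul_polyC eqp_sym eqp_scale.
have Hsz : size d = (size q2 + size q1).-1 by rewrite Hd size_mul.
have Hc : coprimep q2 q1 by apply: (separable_coprime Hsep); rewrite -Hd.
have hs1 : (size q1 < s)%N by move: Hs sq1 sq2; rewrite Hsz; lia.
have hs2 : (size q2 < s)%N by move: Hs sq1 sq2; rewrite Hsz; lia.
have [v1 Hv1] := IH q1 hs1 (dvdp_trans Hq1d Hdf).
have Hq2f : q2 %| f by apply: dvdp_trans (dvdp_mulIl q2 q1) _; rewrite -Hd.
have [v2 Hv2] := IH q2 hs2 Hq2f.
exists (v1 + v2) => q; rewrite Hd Gauss_dvdp //.
have e1 : hT q1 *m v1 = 0 by apply/eqP; rewrite Hv1.
have e2 : hT q2 *m v2 = 0 by apply/eqP; rewrite Hv2.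
apply/idP/idP => [/eqP H|/andP [h2 h1]]; last first.
  move: (Hv1 q) (Hv2 q); rewrite h1 h2 mulmxDr => /eqP -> /eqP ->; by rewrite addr0.
have H1 : hT (q2 * q) *m v1 = 0.
  have : hT (q2 * q) *m (v1 + v2) = 0 by rewrite hTM H mulmx0.
  by rewrite mulmxDr [q2 * q]mulrC [hT (q * q2) *m v2]hTM e2 mulmx0 addr0 mulrC.
have H2 : hT (q1 * q) *m v2 = 0.
  have : hT (q1 * q) *m (v1 + v2) = 0 by rewrite hTM H mulmx0.
  by rewrite mulmxDr [q1 * q]mulrC [hT (q * q1) *m v1]hTM e1 mulmx0 add0r mulrC.
move: (Hv1 (q2 * q)) (Hv2 (q1 * q)); rewrite H1 H2 eqxx Gauss_dvdpr ?Gauss_dvdpr //.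
  by move=> <- <-.
by rewrite coprimep_sym.
Qed.
End Cyc.

Section Bil.
Variables (k : fieldType) (n : nat).
Local Notation N := (n.+1 + n.+1)%N.
Definition Jm : 'M[k]_N := block_mx 0 1%:M 1%:M 0.

Lemma bUE (v w : 'cV[k]_N) : bU v w = (v^T *m Jm *m w) 0 0.
Proof.
rewrite /bU /QU -!sumrB.
rewrite -[v in RHS]vsubmxK -[w in RHS]vsubmxK tr_col_mx /Jm mul_row_block !mulmx0 !mulmx1.
rewrite !add0r !addr0 mul_row_col !mxE.
rewrite -big_split /=; apply: eq_bigr => i _; rewrite !mxE.
ring.
Qed.
End Bil.

Section BilF.
Variables (k : fieldType) (n : nat).
Local Notation N := (n.+1 + n.+1)%N.
Implicit Types (u v w x y : 'cV[k]_N).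

Lemma bU_sym v w : bU v w = bU w v.
Proof. rewrite /bU [v + w]addrC; ring. Qed.

Lemma bUDr v w1 w2 : bU v (w1 + w2) = bU v w1 + bU v w2.
Proof. by rewrite !bUE mulmxDr mxE. Qed.

Lemma bUZr v c w : bU v (c *: w) = c * bU v w.
Proof. by rewrite !bUE -scalemxAr mxE. Qed.

Lemma bUDl v1 v2 w : bU (v1 + v2) w = bU v1 w + bU v2 w.
Proof. by rewrite ![bU _ w]bU_sym bUDr. Qed.

Lemma bUZl c v w : bU (c *: v) w = c * bU v w.
Proof. by rewrite ![bU _ w]bU_sym bUZr. Qed.

Lemma bU0r v : bU v 0 = 0.
Proof. by rewrite bUE mulmx0 mxE. Qed.

Lemma bU0l v : bU 0 v = 0.
Proof. by rewrite bU_sym bU0r. Qed.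

Lemma bU_sumr v I (r : seq I) (P : pred I) (F : I -> 'cV[k]_N) :
  bU v (\sum_(i <- r | P i) F i) = \sum_(i <- r | P i) bU v (F i).
Proof. by elim/big_rec2: _ => [|i x y _ <-]; rewrite ?bU0r ?bUDr. Qed.

Lemma bU_diag v : bU v v = 2%:R * QU v.
Proof.
rewrite /bU /QU -!sumrB mulr_sumr; apply: eq_bigr => i _; rewrite !mxE; ring.
Qed.

Lemma Jm_invol : Jm k n *m Jm k n = 1%:M.
Proof.
rewrite /Jm mulmx_block !mulmx0 !mul0mx !mulmx1 !add0r !addr0.
by rewrite -scalar_mx_block.
Qed.

Lemma bU_nondeg w : (forall u, bU w u = 0) -> w = 0.
Proof.
move=> H.
have H1 : w^T *m Jm k n = 0.
  apply/rowP => j; rewrite [RHS]mxE; move: (H (delta_mx j 0)); rewrite bUE -colE mxE.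
  by [].
have : w^T = 0 by rewrite -[w^T]mulmx1 -Jm_invol mulmxA H1 mul0mx.
by move/(congr1 trmx); rewrite trmxK trmx0.
Qed.

End BilF.

Lemma mx_ext (k : fieldType) m (A B : 'M[k]_m) :
  (forall u : 'cV_m, A *m u = B *m u) -> A = B.
Proof.
move=> H; apply/matrixP => i j.
by move: (congr1 (fun M : 'cV_m => M i 0) (H (delta_mx j 0))); rewrite -!colE !mxE.
Qed.

Lemma form_ext (k : fieldType) m (A B : 'M[k]_m) :
  (forall u w : 'cV_m, (u^T *m A *m w) 0 0 = (u^T *m B *m w) 0 0) -> A = B.
Proof.
move=> H; apply/matrixP => i j.
move: (H (delta_mx i 0) (delta_mx j 0)).
by rewrite trmx_delta -!rowE -!colE !mxE.
Qed.

Section Main.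
Variables (k : fieldType) (n : nat) (f : {poly k}).
Local Notation N := (n.+1 + n.+1)%N.
Local Notation K := (n + n).+1%N.
Implicit Types (a b p q r mu : {poly k}) (T : 'M[k]_N) (v w x y u : 'cV[k]_N).
Hypotheses (H2 : (2%:R : k) != 0) (Hmon : f \is monic) (Hsz : size f = N.+1) (Hsep : separable_poly f).

Definition cf (a mu : {poly k}) : k := ((a * mu) %% f)`_K.
Definition colp (r : {poly k}) : 'cV[k]_N := \col_(i < N) r`_i.
Definition Pm (T : 'M[k]_N) (v : 'cV[k]_N) : 'M[k]_N :=
  \matrix_(i < N, j < N) (horner_mx T 'X^j *m v) i 0.
Definition rep (T : 'M[k]_N) (v : 'cV[k]_N) (a : {poly k}) :=
  forall p q, bU (horner_mx T p *m v) (horner_mx T q *m v) = cf a (p * q).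
Definition cyc (T : 'M[k]_N) (v : 'cV[k]_N) :=
  forall q, (horner_mx T q *m v == 0) = (f %| q).

Lemma fn0 : f != 0.
Proof. by rewrite -size_poly_eq0 Hsz. Qed.

Lemma KN : K = N.-1.
Proof. by rewrite /= addnS. Qed.

Lemma poly_ofE (x : 'cV[k]_N) : poly_of x = \poly_(i < N) x (inord i) 0.
Proof. by rewrite poly_def /poly_of; apply: eq_bigr => i _; rewrite inord_val. Qed.

Lemma size_poly_of (x : 'cV[k]_N) : (size (poly_of x) <= N)%N.
Proof. by rewrite poly_ofE size_poly. Qed.

Lemma colpK r : (size r <= N)%N -> poly_of (colp r) = r.
Proof.
move=> Hr; rewrite poly_ofE; apply/polyP => i; rewrite coef_poly.
case: ifP => Hi; first by rewrite mxE inordK.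
by rewrite nth_default // (leq_trans Hr) // leqNgt Hi.
Qed.

Lemma poly_of_inj (x : 'cV[k]_N) : poly_of x = 0 -> x = 0.
Proof.
move=> H; apply/colP => i; rewrite mxE.
have := congr1 (fun p : {poly k} => p`_i) H.
by rewrite poly_ofE coef_poly ltn_ord inord_val coef0.
Qed.

Lemma size_mod r : (size (r %% f)%R <= N)%N.
Proof. by rewrite -ltnS -Hsz ltn_modp fn0. Qed.

Lemma cfD a p q : cf a (p + q) = cf a p + cf a q.
Proof. by rewrite /cf mulrDr modpD coefD. Qed.

Lemma cfZ a (c : k) p : cf a (c *: p) = c * cf a p.
Proof. by rewrite /cf -scalerAr modpZl coefZ. Qed.

Lemma cf0 a : cf a 0 = 0.
Proof. by rewrite /cf mulr0 mod0p coef0. Qed.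

Lemma cf_sum a I (r : seq I) (P : pred I) (F : I -> {poly k}) :
  cf a (\sum_(i <- r | P i) F i) = \sum_(i <- r | P i) cf a (F i).
Proof. by elim/big_rec2: _ => [|i x y _ <-]; rewrite ?cf0 ?cfD. Qed.

Lemma cf_mod a p : cf a (p %% f) = cf a p.
Proof. by rewrite /cf modp_mul. Qed.

Lemma cfC a p : cf a p = cf p a.
Proof. by rewrite /cf mulrC. Qed.

Lemma cfA a p q : cf (a * p) q = cf a (p * q).
Proof. by rewrite /cf mulrA. Qed.

Lemma cf_congr b (c : {poly k}) mu : f %| b - c -> cf b mu = cf c mu.
Proof.
move=> H; rewrite /cf -[b](subrK c) mulrDl modpD coefD.
by rewrite (modp_eq0 (dvdp_mulr _ H)) coef0 add0r.
Qed.

Lemma cf_poly_of b (x : 'cV[k]_N) mu :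
  cf b (poly_of x * mu) = \sum_(i < N) x i 0 * cf b ('X^i * mu).
Proof.
by rewrite /poly_of mulr_suml cf_sum; apply: eq_bigr => i _; rewrite -scalerAl cfZ.
Qed.

Lemma nondeg r : (size r <= N)%N -> (forall j : 'I_N, cf r 'X^j = 0) -> r = 0.
Proof.
move=> Hr H; apply: contraTeq isT => rn0.
have sr : (0 < size r)%N by rewrite size_poly_gt0.
set j := (N - size r)%N.
have jN : (j < N)%N by rewrite /j; lia.
move: (H (Ordinal jN)); rewrite /cf /= modp_small; last first.
  by rewrite size_mulXn // Hsz /j subnK.
rewrite coefMXn ifF; last by rewrite /j; lia.
have -> : (K - j)%N = (size r).-1 by rewrite -subn1 /j; lia.
by move/eqP; rewrite -lead_coefE lead_coef_eq0 (negPf rn0).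
Qed.

Lemma cf_eq_dvd a b : (forall j : 'I_N, cf a 'X^j = cf b 'X^j) -> f %| a - b.
Proof.
move=> H; apply/modp_eq0P; apply: nondeg; first exact: size_mod.
by move=> j; rewrite cfC cf_mod cfC /cf mulrBl modpD modpN coefD coefN -!/(cf _ _) H subrr.
Qed.


Lemma hT1 (T : 'M[k]_N) (v : 'cV[k]_N) : horner_mx T 1 *m v = v.
Proof. by rewrite -polyC1 horner_mx_C mul1mx. Qed.

Lemma hTMv (T : 'M[k]_N) p q (v : 'cV[k]_N) :
  horner_mx T (p * q) *m v = horner_mx T p *m (horner_mx T q *m v).
Proof. by rewrite rmorphM /= -mulmxE mulmxA. Qed.

Lemma PmE T v x : Pm T v *m x = horner_mx T (poly_of x) *m v.
Proof.
apply/colP => i; rewrite /poly_of linear_sum /= mulmx_suml summxE !mxE.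
apply: eq_bigr => j _; rewrite !mxE horner_mxZ mulr_suml; apply: eq_bigr => l _; rewrite !mxE; ring.
Qed.

Lemma selfadj_poly T : selfadj T ->
  forall p x y, bU (horner_mx T p *m x) y = bU x (horner_mx T p *m y).
Proof.
move=> HT; elim/poly_ind => [|p c IH] x y.
  by rewrite rmorph0 !mul0mx bU0l bU0r.
have cT : T *m horner_mx T p = horner_mx T p *m T by apply: comm_mx_horner.
rewrite rmorphD rmorphM /= horner_mx_X horner_mx_C -!mulmxE !mulmxDl.
by rewrite !mul_scalar_mx bUDl bUDr bUZl bUZr -!mulmxA IH HT !mulmxA cT.
Qed.

Lemma Pm_unit T v : char_poly T = f -> cyc T v -> Pm T v \in unitmx.
Proof.
move=> HcT Hc; apply: colker_unit => x; rewrite PmE => /eqP; rewrite Hc => Hd.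
apply: poly_of_inj; apply: contraTeq Hd => Hn.
apply/negP => /(dvdp_leq Hn); rewrite Hsz => H.
by have := leq_trans H (size_poly_of x); rewrite ltnn.
Qed.

Lemma rep_unique T v a b : rep T v a -> rep T v b -> f %| a - b.
Proof.
move=> Ha Hb; apply: cf_eq_dvd => j.
by move: (Ha 1 'X^j) (Hb 1 'X^j); rewrite mul1r => <- <-.
Qed.

Lemma rep_change T v a l : rep T v a -> rep T (horner_mx T l *m v) (a * l ^+ 2).
Proof.
move=> Ha p q; rewrite -!hTMv Ha /cf; congr (_ %% _)`_K; ring.
Qed.


Lemma rep_exists T v : selfadj T -> char_poly T = f -> cyc T v -> exists a, rep T v a.
Proof.
move=> HT HcT Hc.
pose l mu := bU v (horner_mx T mu *m v).
pose H : 'M[k]_N := \matrix_(j, i) cf ('X^i) ('X^j).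
have HH : forall (c : 'cV[k]_N) (j : 'I_N), (H *m c) j 0 = cf (poly_of c) 'X^j.
  move=> c j; rewrite cfC -[X in cf _ X]mulr1 cf_poly_of mxE.
  by apply: eq_bigr => i _; rewrite mxE mulr1 cfC mulrC.
have Hu : H \in unitmx.
  apply: colker_unit => c Hc0; apply: poly_of_inj; apply: nondeg; first exact: size_poly_of.
  by move=> j; rewrite -HH Hc0 mxE.
pose lv : 'cV[k]_N := \col_(j < N) l 'X^j.
exists (poly_of (invmx H *m lv)).
set a := poly_of _.
have Ha : forall j : 'I_N, cf a 'X^j = l 'X^j.
  by move=> j; rewrite -HH mulKVmx // mxE.
have Hl : forall mu, cf a mu = l mu.
  move=> mu; rewrite -cf_mod /l -(hT_mod HcT mu) -(colpK (size_mod mu)).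
  rewrite /poly_of cf_sum linear_sum /= mulmx_suml bU_sumr; apply: eq_bigr => i _.
  by rewrite cfZ Ha horner_mxZ -scalemxAl bUZr.
move=> p q; rewrite selfadj_poly // -hTMv.
by rewrite Hl.
Qed.

Lemma rep_coprime T v a : char_poly T = f -> cyc T v -> rep T v a -> coprimep a f.
Proof.
move=> HcT Hc Ha; apply: NNPP => Hn.
set g := gcdp a f.
have gn0 : g != 0 by rewrite gcdp_eq0 negb_and fn0 orbT.
have g1 : size g != 1%N by apply/negP => H; apply: Hn; exact: H.
set mu := f %/ g.
have Hf : f = mu * g by rewrite divpK // dvdp_gcdr.
have mun0 : mu != 0 by apply: contraTneq fn0 => H; rewrite Hf H mul0r eqxx.
have Hmu : horner_mx T mu *m v = 0.
  apply: bU_nondeg => u.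
  rewrite -[u](mulKVmx (Pm_unit HcT Hc)) PmE Ha /cf.
  rewrite (modp_eq0 _) ?coef0 //.
  have -> : a * (mu * poly_of (invmx (Pm T v) *m u)) = (a %/ g) * poly_of (invmx (Pm T v) *m u) * (mu * g).
    by rewrite -{1}(divpK (dvdp_gcdl a f)) -/g; ring.
  by rewrite -Hf dvdp_mull.
have sg : (1 < size g)%N by rewrite ltn_neqAle eq_sym g1 size_poly_gt0.
have smu : (0 < size mu)%N by rewrite size_poly_gt0.
move: Hmu => /eqP; rewrite Hc => /(dvdp_leq mun0).
rewrite {1}Hf size_mul // => H.
move: H sg smu; case: (size g) => // s; case: (size mu) => // t.
rewrite addSn addnS /=; lia.
Qed.

Lemma rep_split T v a : char_poly T = f -> cyc T v -> rep T v a -> split_form n f a.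
Proof.
move=> HcT Hc Ha; exists (invmx (Pm T v)); split; first by rewrite unitmx_inv Pm_unit.
move=> u w; rewrite /bL -mulrA -/(cf _ _) -Ha -!PmE !mulKVmx //; exact: Pm_unit.
Qed.


Lemma same_T T v w a b : char_poly T = f -> cyc T v -> rep T v a -> cyc T w -> rep T w b ->
  sqclass_rel f a b.
Proof.
move=> HcT Hcv Ha Hcw Hb.
set l := poly_of (invmx (Pm T v) *m w).
have Hw : w = horner_mx T l *m v by rewrite -PmE mulKVmx // Pm_unit.
have Hal : rep T w (a * l ^+ 2) by rewrite Hw; apply: rep_change.
have Hd := rep_unique Hal Hb.
have Hcop := rep_coprime HcT Hcw Hal.
exists l; split.
  by move: Hcop; rewrite coprimepMl expr2 coprimepMl => /andP [_ /andP [->]].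
by rewrite -opprB dvdpNr.
Qed.

Lemma bU_OU g x y : OU g -> bU (g *m x) (g *m y) = bU x y.
Proof. by case=> _ Hq; rewrite /bU -mulmxDr !Hq. Qed.

Lemma rep_transport T T' g v a : OU g -> T' = g *m T *m invmx g -> rep T v a ->
  rep T' (g *m v) a /\ (cyc T v -> cyc T' (g *m v)).
Proof.
move=> Hg HT Ha; have Hu : g \in unitmx by case: Hg.
have hg : forall p x, horner_mx T' p *m (g *m x) = g *m (horner_mx T p *m x).
  by move=> p x; rewrite HT horner_mx_uconj // !mulmxA mulmxKV.
split; first by move=> p q; rewrite !hg bU_OU.
move=> Hc q; rewrite hg -Hc; apply/eqP/eqP => [H|->]; last by rewrite mulmx0.
by rewrite -(mulKmx Hu (horner_mx T q *m v)) H mulmx0.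
Qed.

Lemma orbit_of_rep T T' w v' b : char_poly T = f -> char_poly T' = f ->
  cyc T w -> rep T w b -> cyc T' v' -> rep T' v' b -> orbit_rel T T'.
Proof.
move=> HcT HcT' Hcw Hb Hcv Hb'.
have PU := Pm_unit HcT Hcw; have PU' := Pm_unit HcT' Hcv.
set g := Pm T' v' *m invmx (Pm T w).
have Hg : forall p, g *m (horner_mx T p *m w) = horner_mx T' p *m v'.
  move=> p; rewrite -(hT_mod HcT) -(hT_mod HcT' p) -(colpK (size_mod p)) -!PmE.
  by rewrite /g -mulmxA mulKmx.
have Hsurj : forall u, exists p, u = horner_mx T p *m w.
  by move=> u; exists (poly_of (invmx (Pm T w) *m u)); rewrite -PmE mulKVmx.
have E : g *m T = T' *m g.
  apply: mx_ext => u; have [p ->] := Hsurj u.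
  have hX : T *m (horner_mx T p *m w) = horner_mx T ('X * p) *m w by rewrite hTMv horner_mx_X.
  by rewrite -[g *m T *m _]mulmxA hX Hg -[T' *m g *m _]mulmxA Hg hTMv horner_mx_X.
exists g; split; last by rewrite E mulmxK // unitmx_mul PU' unitmx_inv.
split; first by rewrite unitmx_mul PU' unitmx_inv.
move=> u; apply: (mulfI H2); rewrite -!bU_diag; have [p ->] := Hsurj u.
by rewrite Hg Hb Hb'.
Qed.


Definition Mm a : 'M[k]_N := \matrix_(i < N, j < N) ((a * 'X^j) %% f)`_i.
Definition Gr a : 'M[k]_N := \matrix_(i < N, j < N) cf a ('X^i * 'X^j).
Definition Rv m : 'M[k]_m := \matrix_(i < m, j < m) ((i + j)%N == m.-1)%:R.

Lemma bL_Gr a x y : bL f a x y = (x^T *m Gr a *m y) 0 0.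
Proof.
have R : (x^T *m Gr a *m y) 0 0 = \sum_(j < N) (\sum_(i < N) x i 0 * Gr a i j) * y j 0.
  rewrite mxE; apply: eq_bigr => j _; rewrite mxE; congr (_ * _).
  by apply: eq_bigr => i _; rewrite mxE.
rewrite R /bL -mulrA -/(cf _ _) cf_poly_of.
rewrite (eq_bigr (fun i => x i 0 * \sum_(j < N) Gr a i j * y j 0)); last first.
  move=> i _; rewrite -cfA -[poly_of y]mulr1 cf_poly_of; congr (_ * _).
  by apply: eq_bigr => j _; rewrite cfA mulr1 mxE mulrC.
under [RHS]eq_bigr do rewrite mulr_suml.
under eq_bigr do rewrite mulr_sumr.
rewrite [RHS]exchange_big /=; apply: eq_bigr => i _; apply: eq_bigr => j _.
by rewrite mulrA.
Qed.

Lemma Gr_Mm a : Gr a = (Mm a)^T *m Gr 1.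
Proof.
apply/matrixP => i j; rewrite !mxE.
rewrite (eq_bigr (fun l => (colp ((a * 'X^i) %% f)) l 0 * cf 1 ('X^l * 'X^j))); last first.
  by move=> l _; rewrite !mxE.
rewrite -cf_poly_of colpK ?size_mod // /cf.
have -> : 1 * ((a * 'X^i) %% f * 'X^j) = 'X^j * ((a * 'X^i) %% f) by ring.
by rewrite modp_mul; congr (_ %% _)`_K; ring.
Qed.

Lemma Rv_block : Rv N = Jm k n *m block_mx (Rv n.+1) 0 0 (Rv n.+1).
Proof.
rewrite /Jm mulmx_block !mul0mx !mulmx0 !mul1mx !add0r !addr0.
rewrite -[Rv N]submxK; congr block_mx; apply/matrixP => i j; rewrite !mxE /=.
- by case: eqP => [H|] //; exfalso; move: H (ltn_ord i) (ltn_ord j); lia.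
- by congr (_ %:R); apply/eqP/eqP; lia.
- by congr (_ %:R); apply/eqP/eqP; lia.
- by case: eqP => [H|] //; exfalso; move: H; lia.
Qed.

Lemma det_RG : \det (Rv N) * \det (Gr 1) = 1.
Proof.
have Hoff : forall (i l : 'I_N), l != rev_ord i -> Rv N i l = 0.
  move=> i l Hl; rewrite !mxE; case: eqP => [H|] //; exfalso.
  by move: Hl H; rewrite -val_eqE /=; lia.
have Hon : forall i : 'I_N, Rv N i (rev_ord i) = 1.
  by move=> i; rewrite !mxE /=; case: eqP => // H; exfalso; apply: H; move: (ltn_ord i); lia.
have HE : forall i j : 'I_N, (Rv N *m Gr 1) i j = Gr 1 (rev_ord i) j.
  move=> i j; rewrite mxE (bigD1 (rev_ord i)) //= big1; last first.
    by move=> l Hl; rewrite Hoff // mul0r.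
  by rewrite Hon mul1r addr0.
rewrite -det_mulmx -det_tr det_trig.
  apply: big1 => i _; rewrite mxE HE mxE /cf mul1r -exprD modp_small; last first.
    by rewrite size_polyXn Hsz ltnS /=; move: (ltn_ord i); lia.
  by rewrite coefXn /=; case: eqP => // H; exfalso; apply: H; move: (ltn_ord i); lia.
apply/is_trig_mxP => i j Hij; rewrite mxE HE mxE /cf mul1r -exprD modp_small; last first.
  by rewrite size_polyXn Hsz ltnS /=; move: (ltn_ord j) Hij; lia.
by rewrite coefXn /=; case: eqP => // H; exfalso; move: (ltn_ord j) Hij H; lia.
Qed.

Lemma split_norm a : split_form n f a -> norm_sq n f a.
Proof.
case=> phi [Pu Hphi].
have E : phi^T *m Gr a *m phi = Jm k n.
  apply: form_ext => u w.
  have -> : u^T *m (phi^T *m Gr a *m phi) *m w = (phi *m u)^T *m Gr a *m (phi *m w).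
    by rewrite trmx_mul !mulmxA.
  by rewrite -bL_Gr Hphi bUE.
have E1 := congr1 determinant E.
rewrite !det_mulmx det_tr Gr_Mm det_mulmx det_tr in E1.
have E2 := det_RG.
have E3 := congr1 determinant Rv_block.
rewrite det_mulmx det_ublock in E3.
have E4 := congr1 determinant (Jm_invol k n).
rewrite det_mulmx det1 in E4.
have Pn0 : \det phi != 0 by rewrite -unitfE -unitmxE.
exists (\det (Rv n.+1) / \det phi).
rewrite /normL -/(Mm a) expr_div_n.
apply: (canRL (mulfK _)); first by rewrite expf_neq0.
rewrite -[LHS]mulr1 -E2 E3.
transitivity ((\det phi * (\det (Mm a) * \det (Gr 1)) * \det phi) * \det (Jm k n) * \det (Rv n.+1) ^+ 2); first by ring.
by rewrite E1 mulrA E4 mul1r.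
Qed.


Lemma modp_sum I (r : seq I) (P : pred I) (F : I -> {poly k}) :
  (\sum_(i <- r | P i) F i) %% f = \sum_(i <- r | P i) (F i %% f).
Proof. by elim/big_rec2: _ => [|i x y _ <-]; rewrite ?mod0p ?modpD. Qed.

Lemma poly_of0 : poly_of (0 : 'cV[k]_N) = 0.
Proof. by rewrite /poly_of big1 // => i _; rewrite mxE scale0r. Qed.

Lemma poly_ofD x y : poly_of (x + y) = poly_of x + poly_of y.
Proof. by rewrite /poly_of -big_split; apply: eq_bigr => i _; rewrite mxE scalerDl. Qed.

Lemma poly_ofZ (c : k) x : poly_of (c *: x) = c *: poly_of x.
Proof. by rewrite /poly_of scaler_sumr; apply: eq_bigr => i _; rewrite mxE scalerA. Qed.

Lemma poly_of_Mm a x : poly_of (Mm a *m x) = (a * poly_of x) %% f.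
Proof.
apply/polyP => i; rewrite poly_ofE coef_poly; case: ifP => Hi; last first.
  by rewrite nth_default // (leq_trans (size_mod _)) // leqNgt Hi.
rewrite mxE /poly_of mulr_sumr modp_sum coef_sum; apply: eq_bigr => j _.
by rewrite !mxE inordK // -scalerAr modpZl coefZ mulrC.
Qed.

Lemma cf_modl a q r : cf a (q %% f * r) = cf a (q * r).
Proof.
rewrite /cf (_ : a * (q %% f * r) = (a * r) * (q %% f)); last by ring.
by rewrite modp_mul; congr (_ %% _)`_K; ring.
Qed.

Lemma XN_mod : 'X^N %% f = 'X^N - f.
Proof.
have Hs : (size ('X^N - f)%R <= N)%N.
  apply/leq_sizeP => j Hj; rewrite coefB coefXn.
  case: eqP => [->|Hn].
    by move/monicP: Hmon; rewrite lead_coefE Hsz /= => ->; rewrite subrr.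
  by rewrite nth_default ?subrr // Hsz; move: Hj Hn; lia.
rewrite -{1}(subrK f 'X^N) modpD modpp addr0 modp_small //.
by rewrite Hsz ltnS; apply: Hs.
Qed.

Lemma char_poly_tr m (A : 'M[k]_m) : char_poly A^T = char_poly A.
Proof.
rewrite /char_poly -det_tr; congr (\det _).
by rewrite /char_poly_mx linearB /= tr_scalar_mx map_trmx trmxK.
Qed.

Lemma char_poly_conj (P A : 'M[k]_N) : P \in unitmx -> char_poly (invmx P *m A *m P) = char_poly A.
Proof.
move=> Pu.
have E : char_poly_mx (invmx P *m A *m P) =
    map_mx polyC (invmx P) *m char_poly_mx A *m map_mx polyC P.
  rewrite /char_poly_mx mulmxBr mulmxBl -!map_mxM; congr (_ - _).
  by rewrite scalar_mxC -mulmxA -map_mxM mulVmx // map_mx1 mulmx1.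
rewrite /char_poly E !det_mulmx !det_map_mx mulrC mulrA -rmorphM /= -det_mulmx mulmxV //.
by rewrite det1 rmorph1 mul1r.
Qed.

Lemma char_companion (p : {poly k}) m (e : (size p).-1 = m) : p \is monic ->
  char_poly (castmx (e, e) (companionmx p)) = p.
Proof. by case: m / e; rewrite castmx_id; exact: companionmxK. Qed.

Lemma charX : char_poly (Mm 'X) = f.
Proof.
have e : (size f).-1 = N by rewrite Hsz.
rewrite -[in RHS](char_companion e Hmon) -char_poly_tr; congr char_poly.
apply/matrixP => i j; rewrite !mxE castmxE /= mxE /= Hsz /= -exprS.
case: eqP => Hi.
  have -> : i.+1 = N by move: Hi; lia.
  rewrite XN_mod coefB coefXn; case: eqP => [Hj|_]; last by rewrite sub0r.
  by exfalso; move: (ltn_ord j); lia.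
rewrite modp_small; last by rewrite size_polyXn Hsz; move: (ltn_ord i) Hi; lia.
by rewrite coefXn eq_sym.
Qed.


Lemma surj a : split_form n f a -> exists T, exists v, [/\ Vf n f T, cyc T v & rep T v a].
Proof.
case=> phi [Pu Hphi].
set C := Mm 'X.
set T := invmx phi *m C *m phi.
have Hb : forall x y, bL f a x y = bU (invmx phi *m x) (invmx phi *m y).
  by move=> x y; rewrite -Hphi !mulKVmx.
have hC : forall p x, poly_of (horner_mx C p *m x) = (p * poly_of x) %% f.
  elim/poly_ind => [|p c IH] x.
    by rewrite rmorph0 mul0mx poly_of0 mul0r mod0p.
  rewrite rmorphD rmorphM /= horner_mx_X horner_mx_C -mulmxE mulmxDl -mulmxA.
  rewrite mul_scalar_mx poly_ofD poly_ofZ IH poly_of_Mm modp_mul mulrDl modpD.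
  rewrite -mul_polyC (modp_small (_ : (size (c%:P * poly_of x)%R < size f)%N)).
    by rewrite mulrA -(mulrA p).
  rewrite mul_polyC Hsz ltnS; apply: leq_trans (size_scale_leq _ _) (size_poly_of _).
have HT : selfadj T.
  move=> u w; rewrite -Hphi -[bU u _]Hphi /T.
  rewrite !mulmxA mulmxV // !mul1mx -!mulmxA /bL -!mulrA -!/(cf _ _).
  rewrite !poly_of_Mm (cf_modl a ('X * poly_of (phi *m u))).
  rewrite [poly_of (phi *m u) * _]mulrC (cf_modl a ('X * poly_of (phi *m w))).
  by congr (cf a _); ring.
have HcT : char_poly T = f by rewrite char_poly_conj // charX.
pose e0 : 'cV[k]_N := colp 1.
have pe0 : poly_of e0 = 1 by rewrite colpK // size_poly1.
exists T, (invmx phi *m e0).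
have hT : forall p, horner_mx T p *m (invmx phi *m e0) = invmx phi *m (horner_mx C p *m e0).
  by move=> p; rewrite /T horner_mx_uconjC // !mulmxA mulmxK // mulmxA.
split => //.
- move=> q; rewrite hT.
  apply/eqP/idP => [H|H].
    have : horner_mx C q *m e0 = 0 by rewrite -(mulKVmx Pu (horner_mx C q *m e0)) H mulmx0.
    by move/(congr1 (@poly_of k n)); rewrite hC pe0 mulr1 poly_of0 => /modp_eq0P.
  apply/eqP; rewrite (_ : horner_mx C q *m e0 = 0) ?mulmx0 //.
  by apply: poly_of_inj; rewrite hC pe0 mulr1; apply/modp_eq0P.
- move=> p q; rewrite !hT -Hb /bL -mulrA -/(cf _ _) !hC pe0 !mulr1.
  by rewrite (cf_modl a p) [p * _]mulrC (cf_modl a q) mulrC.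
Qed.


Lemma main_aux :
  exists Phi : 'M[k]_N -> {poly k},
    [/\ forall T, Vf n f T ->
          [/\ coprimep (Phi T) f, norm_sq n f (Phi T) & split_form n f (Phi T)],
        forall T T', Vf n f T -> Vf n f T' ->
          (orbit_rel T T' <-> sqclass_rel f (Phi T) (Phi T')) &
        forall a : {poly k}, coprimep a f -> norm_sq n f a -> split_form n f a ->
          exists T, Vf n f T /\ sqclass_rel f (Phi T) a].
Proof.
have spec : forall T, Vf n f T -> exists a, exists v, cyc T v /\ rep T v a.
  move=> T [HT HcT]; have [v Hv] := cyc_gen HcT Hsep (dvdpp f).
  have Hc : cyc T v by [].
  have [a Ha] := rep_exists HT HcT Hc.
  by exists a, v.
pose Phi T := epsilon (inhabits (0 : {poly k})) (fun a => exists v, cyc T v /\ rep T v a).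
have PhiS : forall T, Vf n f T -> exists v, cyc T v /\ rep T v (Phi T).
  move=> T HT; have [a [v H]] := spec T HT.
  by apply: (epsilon_spec (inhabits (0 : {poly k})) (fun a => exists v, cyc T v /\ rep T v a)); exists a, v.
exists Phi; split.
- move=> T HT; have [v [Hc Ha]] := PhiS T HT; case: HT => HT HcT.
  split; [exact: rep_coprime HcT Hc Ha | apply: split_norm |]; exact: rep_split HcT Hc Ha.
- move=> T T' HT HT'; have [v [Hc Ha]] := PhiS T HT; have [v' [Hc' Ha']] := PhiS T' HT'.
  case: HT => HT HcT; case: HT' => HT' HcT'.
  split.
    case=> g [Hg HgT]; have [Hr Hcy] := rep_transport Hg HgT Ha.
    exact: same_T HcT' (Hcy Hc) Hr Hc' Ha'.
  case=> l [Hl Hd].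
  set w := horner_mx T l *m v.
  have Hw : rep T w (Phi T').
    move=> p q; rewrite (rep_change l Ha p q); apply: cf_congr.
    by rewrite -opprB dvdpNr.
  have Hcw : cyc T w.
    move=> q; rewrite /w -hTMv Hc Gauss_dvdpl //.
    by rewrite coprimep_sym.
  exact: orbit_of_rep HcT HcT' Hcw Hw Hc' Ha'.
- move=> a Hco Hn Hs; have [T [v [HT Hc Ha]]] := surj Hs.
  have [v' [Hc' Ha']] := PhiS T HT.
  exists T; split => //.
  case: HT => HT HcT.
  exact: same_T HcT Hc' Ha' Hc Ha.
Qed.

End Main.

Theorem theorem2p5 (k : fieldType) (n : nat) (f : {poly k}) :
  (2%:R : k) != 0 -> f \is monic -> size f = (n.+1 + n.+1).+1 -> separable_poly f ->
  exists Phi : 'M[k]_(n.+1 + n.+1) -> {poly k},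
    [/\ forall T, Vf n f T ->
          [/\ coprimep (Phi T) f, norm_sq n f (Phi T) & split_form n f (Phi T)],
        forall T T', Vf n f T -> Vf n f T' ->
          (orbit_rel T T' <-> sqclass_rel f (Phi T) (Phi T')) &
        forall a : {poly k}, coprimep a f -> norm_sq n f a -> split_form n f a ->
          exists T, Vf n f T /\ sqclass_rel f (Phi T) a].
Proof. by move=> H2 Hm Hs Hsep; apply: main_aux. Qed.
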